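(* Let $q\ge2$ and $L\ge2$ be integers, let $\mathcal{C}\subseteq[q]^n$ be a code, and suppose the matrix $\varphi(\mathcal{C})/\sqrt{(q-1)n}$ satisfies RIP-2 of order $L$ with constant $1/2$. Then $\mathcal{C}$ is $\Big(\big(1-\frac1q\big)\big(1-\sqrt{\frac{1.5}{L-1}}\big),\,L-1\Big)$-list decodable.
   Context: $[q]=\{0,1,\dots,q-1\}$; $\delta(x,y)$ is the fraction of coordinates where $x,y\in[q]^n$ differ. A code $\mathcal{C}$ is $(\rho,\ell)$-list decodable if for every $y\in[q]^n$ the number of $c\in\mathcal{C}$ with $\delta(c,y)<\rho$ is at most $\ell$. Simplex encoding: for $x\in[q]$, $\varphi(x)\in\mathbb{C}^{q-1}$ has coordinates $\varphi(x)(\alpha)=\omega^{x\alpha}$ for $\alpha\in\{1,\dots,q-1\}$, $\omega=e^{2\pi\mathbf{i}/q}$; for $x\in[q]^n$, $\varphi(x)\in\mathbb{C}^{n(q-1)}$ is the concatenation of $\varphi(x_1),\dots,\varphi(x_n)$. $\varphi(\mathcal{C})$ is the $(q-1)n\times|\mathcal{C}|$ matrix whose column indexed by $c\in\mathcal{C}$ is $\varphi(c)$. A matrix $M\in\mathbb{C}^{m\times N}$ satisfies RIP-2 of order $k$ with constant $\delta$ if for every $x\in\mathbb{C}^N$ with at most $k$ nonzero entries, $(1-\delta)\|x\|_2^2\le\|Mx\|_2^2\le(1+\delta)\|x\|_2^2$. *)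

(* Defs.v *)
From mathcomp Require Import all_boot all_order all_algebra.
From mathcomp Require Import all_classical all_reals all_analysis.
From mathcomp Require Import complex.
Set Implicit Arguments. Unset Strict Implicit. Unset Printing Implicit Defensive.
Import Order.TTheory GRing.Theory Num.Theory.
Local Open Scope ring_scope.
Local Open Scope complex_scope.

Definition word (q n : nat) := {ffun 'I_n -> 'I_q}.

Section Defs.
Variable R : realType.
Variables q n : nat.

Definition hdist (x y : word q n) : R :=
  #|[set i : 'I_n | x i != y i]|%:R / n%:R.

Definition list_decodable (C : {set word q n}) (rho : R) (l : nat) : Prop :=
  forall y : word q n, (#|[set c in C | (hdist c y < rho)%R]| <= l)%N.

Definition omega : R[i] := cos (2 * pi / q%:R) +i* sin (2 * pi / q%:R).

(* simplex encoding: phi(x) in C^{n(q-1)}; coordinate (i, alpha) for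
   i in [n] and alpha in {1,...,q-1} is omega^(x_i * alpha). *)
Definition simplex_enc (x : word q n) (i : 'I_n) (a : 'I_q) : R[i] :=
  omega ^+ (x i * a)%N.

Definition sqnorm_enc (v : 'I_n -> 'I_q -> R[i]) : R[i] :=
  \sum_(i < n) \sum_(a < q | (0 < a)%N) `|v i a| ^+ 2.

Definition scaled_mat_apply (C : {set word q n}) (x : word q n -> R[i])
  (i : 'I_n) (a : 'I_q) : R[i] :=
  \sum_(c in C) x c * simplex_enc c i a / (Num.sqrt ((q.-1 * n)%N%:R : R))%:C.

(* RIP-2 of order k with constant d for the matrix phi(C)/sqrt((q-1)n),
   whose columns are indexed by the codewords c in C; a vector of C^C is
   represented by a function x on words vanishing outside C. *)
Definition RIP2_scaled_simplex (C : {set word q n}) (k : nat) (d : R) : Prop :=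
  forall x : word q n -> R[i],
    (forall c, c \notin C -> x c = 0%R) ->
    (#|[set c | x c != 0%R]| <= k)%N ->
    ((1 - d)%:C * \sum_(c in C) `|x c| ^+ 2 <= sqnorm_enc (scaled_mat_apply C x))
    /\ (sqnorm_enc (scaled_mat_apply C x) <= (1 + d)%:C * \sum_(c in C) `|x c| ^+ 2).

End Defs.

(* Main.v *)
Require Import Defs.
From mathcomp Require Import all_boot all_order all_algebra.
From mathcomp Require Import all_classical all_reals all_analysis.
From mathcomp Require Import complex.
From mathcomp Require Import ring lra.
Import Order.TTheory GRing.Theory Num.Theory.
Local Open Scope ring_scope.

Section Aux.
Local Open Scope complex_scope.
Variable R : realType.

Lemma cis_mul (a b : R) :
  (cos a +i* sin a) * (cos b +i* sin b) = cos (a + b) +i* sin (a + b).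
Proof.
rewrite cosD sinD; simpc; congr Complex; ring.
Qed.

Lemma omegaX (q m : nat) : omega R q ^+ m =
  cos (m%:R * (2 * pi / q%:R)) +i* sin (m%:R * (2 * pi / q%:R)).
Proof.
elim: m => [|m IH].
  by rewrite expr0 mul0r cos0 sin0.
have -> : m.+1%:R * (2 * pi / q%:R) = m%:R * (2 * pi / q%:R) + 2 * pi / q%:R :> R.
  by rewrite -natr1 mulrDl mul1r.
by rewrite exprSr IH /omega cis_mul.
Qed.

Lemma cis_conj (a : R) : conjc (cos a +i* sin a) = cos (- a) +i* sin (- a).
Proof. by rewrite cosN sinN. Qed.

Lemma cis_eq1 (x : R) : - (pi *+ 2) < x < pi *+ 2 -> x != 0 ->
  cos x +i* sin x != 1.
Proof.
move=> /andP[h1 h2] hx; apply/negP => /eqP[].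
have -> : x = (x / 2) *+ 2 by rewrite -mulr_natr mulfVK // pnatr_eq0.
rewrite cos_mulr2n => hc _.
have hs : sin (x / 2) ^+ 2 = 0.
  have := cos2Dsin2 (x / 2); lra.
have {}hs : sin (x / 2) = 0 by apply/eqP; rewrite -sqrf_eq0 hs.
have [xp|xn] := ltrP 0 x.
  have : 0 < sin (x / 2) by apply: sin_gt0_pi; apply/andP; split; lra.
  lra.
have xn' : x < 0 by rewrite lt_neqAle hx xn.
have : 0 < sin (- (x / 2)) by apply: sin_gt0_pi; apply/andP; split; lra.
rewrite sinN; lra.
Qed.


Lemma omega_q (q : nat) : (0 < q)%N -> omega R q ^+ q = 1.
Proof.
move=> q0; rewrite omegaX mulrC divfK ?pnatr_eq0 -?lt0n // mulr_natl.
by rewrite cos2pi sin2pi.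
Qed.

Lemma cis_omega (q c y : nat) : omega R q ^+ c * conjc (omega R q ^+ y) =
  cos ((c%:R - y%:R) * (2 * pi / q%:R)) +i* sin ((c%:R - y%:R) * (2 * pi / q%:R)).
Proof. by rewrite !omegaX cis_conj cis_mul mulrBl. Qed.

Lemma coord_sum (q : nat) (c y : 'I_q) : (1 < q)%N ->
  \sum_(a < q | (0 < a)%N) omega R q ^+ (c * a) * conjc (omega R q ^+ (y * a))
  = if c == y then (q.-1)%:R else -1.
Proof.
case: q c y => // q c y q1.
set z := omega R q.+1 ^+ c * conjc (omega R q.+1 ^+ y).
have zE : forall a : nat, omega R q.+1 ^+ (c * a) * conjc (omega R q.+1 ^+ (y * a)) = z ^+ a.
  by move=> a; rewrite /z exprMn -rmorphXn -!exprM.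
under eq_bigr do rewrite zE.
have hall : \sum_(a < q.+1) z ^+ a = z ^+ 0 + \sum_(a < q.+1 | (0 < a)%N) z ^+ a.
  rewrite (bigD1 ord0) //=; congr (_ + _); apply: eq_bigl => a.
  by rewrite lt0n; congr negb.
have th0 : 0 < 2 * pi / q.+1%:R :> R by rewrite divr_gt0 ?mulr_gt0 ?pi_gt0.
have thq : q.+1%:R * (2 * pi / q.+1%:R) = pi *+ 2 :> R.
  by rewrite mulrC divfK ?pnatr_eq0 // mulr_natl.
case: eqP => [cy|cy].
  have z1 : z = 1 by rewrite /z cis_omega cy subrr mul0r cos0 sin0.
  under eq_bigr do rewrite z1 expr1n.
  rewrite sumr_const.
  have -> : #|[pred a : 'I_q.+1 | (0 < a)%N]| = q.
    have h1 := cardC1 (ord0 : 'I_q.+1); rewrite card_ord /= in h1.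
    apply: etrans h1; apply: eq_card => a; rewrite !inE lt0n.
    by case: a => [[|a] ?].
  by rewrite -mulr_natl mulr1.
have zn1 : z != 1.
  rewrite /z cis_omega; apply: cis_eq1.
    have hc : (c%:R : R) < q.+1%:R by rewrite ltr_nat.
    have hy : (y%:R : R) < q.+1%:R by rewrite ltr_nat.
    have hc0 : (0 : R) <= c%:R by rewrite ler0n.
    have hy0 : (0 : R) <= y%:R by rewrite ler0n.
    set t := 2 * pi / q.+1%:R in th0 thq *.
    have h1 : c%:R * t < q.+1%:R * t by rewrite ltr_pM2r.
    have h2 : y%:R * t < q.+1%:R * t by rewrite ltr_pM2r.
    have h3 : 0 <= c%:R * t by rewrite mulr_ge0 // ltW.
    have h4 : 0 <= y%:R * t by rewrite mulr_ge0 // ltW.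
    rewrite mulrBl; apply/andP; split; lra.
  rewrite mulf_eq0 negb_or (gt_eqF th0) andbT subr_eq0.
  apply/negP => /eqP /(congr1 (fun r : R => r)) /eqP; rewrite eqr_nat => /eqP h.
  by apply: cy; apply: val_inj.
have zq : z ^+ q.+1 = 1.
  by rewrite /z exprMn -!exprM mulnC exprM omega_q // expr1n -rmorphXn -exprM mulnC exprM omega_q // expr1n rmorph1 mulr1.
have s0 : \sum_(a < q.+1) z ^+ a = 0.
  have := subrX1 z q.+1; rewrite zq subrr => /esym /eqP; rewrite mulf_eq0 subr_eq0 (negbTE zn1) /=.
  by move/eqP.
by move: hall; rewrite s0 expr0 => /eqP; rewrite eq_sym addrC addr_eq0 => /eqP.
Qed.


Lemma sum_ind_nat (I : finType) (P : pred I) :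
  \sum_(i : I) (P i)%:R = (#|[set i | P i]|)%:R :> R[i].
Proof.
rewrite -sumr_const [RHS]big_mkcond /=; apply: eq_bigr => i _.
by rewrite inE; case: (P i).
Qed.

Lemma inner_word (q n : nat) (w y : word q n) : (1 < q)%N ->
  \sum_(i < n) \sum_(a < q | (0 < a)%N)
     simplex_enc R w i a * conjc (simplex_enc R y i a)
  = ((q.-1 * n)%:R - (q * #|[set i | w i != y i]|)%:R : R[i]).
Proof.
move=> q1.
transitivity (\sum_(i < n) ((q.-1)%:R - q%:R * (w i != y i)%:R : R[i])).
  apply: eq_bigr => i _; rewrite /simplex_enc coord_sum //.
  case: eqP => _ /=; first by rewrite mulr0 subr0.
  by rewrite mulr1 -{2}(prednK (ltnW q1)) -natr1 opprD addrA subrr add0r.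
rewrite sumrB sumr_const card_ord -mulr_sumr sum_ind_nat.
by rewrite -mulrnA -natrM.
Qed.

Lemma omega_norm (q m : nat) : omega R q ^+ m * conjc (omega R q ^+ m) = 1.
Proof. by rewrite cis_omega subrr mul0r cos0 sin0. Qed.


Lemma cjM (z w : R[i]) : conjc (z * w) = conjc z * conjc w.
Proof. exact: rmorphM. Qed.
Lemma cjB (z w : R[i]) : conjc (z - w) = conjc z - conjc w.
Proof. exact: rmorphB. Qed.

Lemma lin_sum (I : finType) (P : pred I) (A S B : I -> R[i]) (c d : R[i]) :
  \sum_(k | P k) (A k - c * (S k + conjc (S k)) + d * B k) =
  \sum_(k | P k) A k - c * (\sum_(k | P k) S k + conjc (\sum_(k | P k) S k))
  + d * \sum_(k | P k) B k.
Proof.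
by rewrite big_split sumrB /= -!mulr_sumr big_split /= rmorph_sum.
Qed.

Lemma exp1 (I : finType) (P : pred I) (u v : I -> R[i]) (t : R) :
  \sum_(k | P k) (u k - t%:C * v k) * conjc (u k - t%:C * v k) =
  \sum_(k | P k) u k * conjc (u k)
  - t%:C * (\sum_(k | P k) u k * conjc (v k) + conjc (\sum_(k | P k) u k * conjc (v k)))
  + t%:C ^+ 2 * \sum_(k | P k) v k * conjc (v k).
Proof.
rewrite -lin_sum; apply: eq_bigr => k _.
rewrite !cjB !cjM conjc_real conjcK; ring.
Qed.


Lemma sqnormE (q n : nat) (v : 'I_n -> 'I_q -> R[i]) :
  sqnorm_enc v = \sum_(i < n) \sum_(a < q | (0 < a)%N) v i a * conjc (v i a).
Proof. by apply: eq_bigr => i _; apply: eq_bigr => a _; rewrite sqr_normc. Qed.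

Lemma key (q n : nat) (T : {set word q n}) (y : word q n) (t : R) : (1 < q)%N ->
  0 <= sqnorm_enc (fun i a => \sum_(c in T) simplex_enc R c i a)
   - t%:C * (\sum_(c in T) ((q.-1 * n)%:R - (q * #|[set i | c i != y i]|)%:R)
     + conjc (\sum_(c in T) ((q.-1 * n)%:R - (q * #|[set i | c i != y i]|)%:R)))
   + t%:C ^+ 2 * (q.-1 * n)%:R.
Proof.
move=> q1.
set u := fun i a => \sum_(c in T) simplex_enc R c i a.
set v := fun i a => simplex_enc R y i a.
have H : 0 <= \sum_(i < n) \sum_(a < q | (0 < a)%N)
   (u i a - t%:C * v i a) * conjc (u i a - t%:C * v i a).
  by apply: sumr_ge0 => i _; apply: sumr_ge0 => a _; apply: mulcJ_ge0.
rewrite (eq_bigr _ (fun i _ => @exp1 _ (fun a : 'I_q => (0 < a)%N) (u i) (v i) t)) in H.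
rewrite lin_sum in H.
have -> : \sum_(c in T) ((q.-1 * n)%:R - (q * #|[set i | c i != y i]|)%:R) =
   \sum_(i < n) \sum_(a < q | (0 < a)%N) u i a * conjc (v i a).
  transitivity (\sum_(c in T) \sum_(i < n) \sum_(a < q | (0 < a)%N)
     simplex_enc R c i a * conjc (v i a)).
    by apply: eq_bigr => c _; rewrite inner_word.
  rewrite exchange_big /=; apply: eq_bigr => i _.
  rewrite exchange_big /=; apply: eq_bigr => a _.
  by rewrite mulr_suml.
have -> : (q.-1 * n)%:R = \sum_(i < n) \sum_(a < q | (0 < a)%N) v i a * conjc (v i a).
  by rewrite inner_word // [X in (q * X)%N](_ : _ = 0%N) ?muln0 ?subr0 //; apply/eqP; rewrite cards_eq0; apply/eqP/setP => i; rewrite !inE eqxx.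
by rewrite sqnormE.
Qed.


Lemma cRD (a b : R) : (a + b)%:C = a%:C + b%:C. Proof. exact: rmorphD. Qed.
Lemma cRB (a b : R) : (a - b)%:C = a%:C - b%:C. Proof. exact: rmorphB. Qed.
Lemma cRM (a b : R) : (a * b)%:C = a%:C * b%:C. Proof. exact: rmorphM. Qed.
Lemma cRX (a : R) (k : nat) : (a ^+ k)%:C = a%:C ^+ k. Proof. exact: rmorphXn. Qed.
Lemma cRsum (I : finType) (P : pred I) (F : I -> R) :
  (\sum_(i | P i) F i)%:C = \sum_(i | P i) (F i)%:C.
Proof. exact: rmorph_sum. Qed.
Lemma cRn (k : nat) : (k%:R : R)%:C = k%:R. Proof. exact: rmorph_nat. Qed.

Lemma sum_in_sub (I : finType) (T C : {set I}) (F : I -> R[i]) : T \subset C ->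
  \sum_(c in C) (c \in T)%:R * F c = \sum_(c in T) F c.
Proof.
move=> sTC; rewrite (big_setID T) /= (finset.setIidPr sTC) [X in _ + X]big1 ?addr0.
  by apply: eq_bigr => c ->; rewrite mul1r.
by move=> c /setDP[_ /negbTE ->]; rewrite mul0r.
Qed.

Lemma main_aux (q L n : nat) (C : {set word q n}) :
  (2 <= q)%N -> (2 <= L)%N ->
  RIP2_scaled_simplex C L (1 / 2 : R) ->
  list_decodable C
    ((1 - 1 / q%:R) * (1 - Num.sqrt ((3 / 2) / (L.-1)%:R : R))) L.-1.
Proof.
move=> q2 L2 rip y.
have q1 : (1 < q)%N by [].
set s := Num.sqrt _.
set rho := (_ * _).
set S := [set c in C | hdist R c y < rho].
rewrite leqNgt; apply/negP => hS.
have LS : (L <= #|S|)%N by rewrite -(prednK (ltnW L2)).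
have [n0|npos] := posnP n.
  have : (#|S| <= 1)%N.
    apply: leq_trans (max_card (mem S)) _.
    by rewrite card_ffun !card_ord n0 expn0.
  by move=> h; move: (leq_trans LS h); rewrite leqNgt L2.
have [T sTS cT] : exists2 T : {set word q n}, T \subset S & #|T| = L.
  exists [set x in take L (enum S)].
    by apply/fintype.subsetP => x; rewrite inE => /mem_take; rewrite mem_enum.
  rewrite cardsE; move/card_uniqP: (take_uniq L (enum_uniq (mem S))) ->.
  by rewrite size_takel // -cardE.
have sSC : S \subset C by apply/fintype.subsetP => c; rewrite inE => /andP[].
have sTC : T \subset C := fintype.subset_trans sTS sSC.
set x := fun c : word q n => ((c \in T)%:R : R[i]).
have hx1 : forall c, c \notin C -> x c = 0.
  move=> c cC; rewrite /x.
  have /negbTE -> // : c \notin T by apply: contra cC; apply: (fintype.subsetP sTC).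
have hx2 : (#|[set c | x c != 0%R]| <= L)%N.
  rewrite (_ : [set c | x c != 0%R] = T) ?cT //; apply/finset.setP => c.
  by rewrite inE /x; case: (c \in T); rewrite ?oner_eq0 ?eqxx.
have [_ hup] := rip x hx1 hx2.
have hsum : \sum_(c in C) `|x c| ^+ 2 = L%:R.
  transitivity (\sum_(c in C) (c \in T)%:R * (1:R[i])).
    apply: eq_bigr => c _; rewrite /x mulr1.
    by case: (c \in T); rewrite ?normr1 ?normr0 ?expr1n ?expr0n.
  by rewrite sum_in_sub // sumr_const cT.
set N := (q.-1 * n)%N.
have Npos : (0 < N)%N by rewrite muln_gt0 npos andbT -ltnS prednK // ltnW.
set sN := Num.sqrt (N%:R : R).
set u := fun i a => \sum_(c in T) simplex_enc R c i a.
have hscale : sqnorm_enc (scaled_mat_apply C x) = sqnorm_enc u / N%:R.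
  rewrite !sqnormE mulr_suml; apply: eq_bigr => i _; rewrite mulr_suml; apply: eq_bigr => a _.
  have -> : scaled_mat_apply C x i a = u i a / sN%:C.
    rewrite /scaled_mat_apply (eq_bigr (fun c => (c \in T)%:R * (simplex_enc R c i a / sN%:C))).
      by rewrite sum_in_sub // mulr_suml.
    by move=> c _; rewrite mulrA.
  rewrite cjM conjc_inv conjc_real.
  have e : sN%:C * sN%:C = N%:R by rewrite -cRM -expr2 sqr_sqrtr ?ler0n // cRn.
  by rewrite mulrACA -invfM e.
have hup2 : sqnorm_enc u <= ((1 + 1/2) * L%:R * N%:R : R)%:C.
  rewrite hscale hsum in hup.
  have := ler_wpM2r (ler0n _ N) hup; rewrite divfK ?pnatr_eq0 -?lt0n //.
  by rewrite !cRM !cRn.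
set p := \sum_(c in T) ((N%:R - (q * #|[set i | c i != y i]|)%:R) : R).
have hP : \sum_(c in T) ((N%:R - (q * #|[set i | c i != y i]|)%:R) : R[i]) = p%:C.
  rewrite /p cRsum; apply: eq_bigr => c _; by rewrite cRB !cRn.
set t := L%:R * s.
have hk := @key q n T y t q1.
rewrite hP conjc_real in hk.
have h0 : (0 : R[i]) <= (((1 + 1/2) * L%:R * N%:R) - t * (p + p) + t ^+ 2 * N%:R)%:C.
  apply: le_trans hk _.
  rewrite cRD cRB [(_ ^+ 2 * _)%:C]cRM cRX !cRM cRD !cRn cRD lerD2r lerD2r.
  by move: hup2; rewrite !cRM cRD !cRM !cRn.
rewrite ler0c in h0.
have Lm : (0 < L.-1)%N by rewrite -ltnS prednK // ltnW.
have s2 : s ^+ 2 = 3/2 / (L.-1)%:R by rewrite sqr_sqrtr // divr_ge0 // ler0n.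
have s0 : 0 < s by rewrite sqrtr_gt0 divr_gt0 // ltr0n.
have Lr : (L%:R : R) = (L.-1)%:R + 1 by rewrite natr1 prednK // ltnW.
have s2' : s ^+ 2 * (L.-1)%:R = 3/2 by rewrite s2 divfK // pnatr_eq0 -lt0n.
have hN : (0 : R) < N%:R by rewrite ltr0n.
have hL : (0 : R) < L%:R by rewrite ltr0n ltnW.
have hp : L%:R * (N%:R * s) <= p.
  have : \sum_(c in T) (N%:R * s) <= p.
    apply: ler_sum => c cT'.
    have := fintype.subsetP sTS c cT'; rewrite inE => /andP[_ hd].
    rewrite /hdist in hd.
    set D := #|[set i | c i != y i]| in hd *.
    have hn : (0 : R) < n%:R by rewrite ltr0n.
    have hQ : (0 : R) < q%:R by rewrite ltr0n ltnW.
    rewrite ltr_pdivrMr // in hd.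
    have e : q%:R * ((1 - 1/q%:R) * (1 - s) * n%:R) = (q%:R - 1) * (1 - s) * n%:R.
      by field; rewrite gt_eqF.
    have h3 : q%:R * D%:R < (q%:R - 1) * (1 - s) * n%:R by rewrite -e ltr_pM2l.
    have eq1 : (q.-1)%:R = q%:R - 1 :> R by rewrite -(@natrB _ q 1) ?subn1 // ltnW.
    rewrite /N !natrM eq1.
    nra.
  by rewrite sumr_const cT [L%:R * _]mulr_natl.
have ht : 2 * t * (L%:R * (N%:R * s)) <= t * (p + p).
  have t0 : 0 <= t by rewrite mulr_ge0 // ltW.
  nra.
rewrite -/t in s2'.
have f1 : (L%:R * N%:R) * (s^+2 * (L.-1)%:R) = (L%:R * N%:R) * (3/2) by rewrite s2'.
move: h0 ht f1 hp; rewrite /t Lr; set Lm1 := (L.-1)%:R : R; set Nr := (N%:R : R) => h0 ht f1 hp.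
have : 0 < (Lm1 + 1) * Nr * s ^+ 2 by rewrite mulr_gt0 ?exprn_gt0 // mulr_gt0 //; rewrite -Lr.
nra.
Qed.

End Aux.

Theorem theorem3p5 (R : realType) (q L n : nat) (C : {set word q n}) :
  (2 <= q)%N -> (2 <= L)%N ->
  RIP2_scaled_simplex C L (1 / 2 : R) ->
  list_decodable C
    ((1 - 1 / q%:R) * (1 - Num.sqrt ((3 / 2) / (L.-1)%:R : R))) L.-1.
Proof. exact: main_aux. Qed.
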